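(* Let $G$ be a weighted planar graph with strictly positive edge weights in which shortest paths are unique. Let $R_{i+1}$ be a region (edge-induced subgraph) of $G$ whose boundary vertex set $\partial R_{i+1}$ lies on a single simple cycle $C$ bounding a face (hole) of $R_{i+1}$, and let $R_{i+1}^{\operatorname{out}}$ denote the subgraph of $G$ induced by the edges lying on the side of $C$ not containing $R_{i+1}$, together with $C$. Let $R_i$ be a subregion of $R_{i+1}$ (a region of the next-finer level of the hierarchical division whose edges are contained in $R_{i+1}$), let $q\in\partial R_i$, and let $v$ be a vertex with $v\notin R_{i+1}$. Consider the additively weighted Voronoi diagram of $R_{i+1}^{\operatorname{out}}$ with site set $\partial R_{i+1}$ and weights $\omega(s)=\operatorname{dist}_G(q,s)$. Then $v\in\operatorname{Vor}(s)$ if and only if $s$ is the last vertex of $\partial R_{i+1}$ on the shortest path from $q$ to $v$ in $G$; moreover, for this $s$, $d^\omega(s,v)=\operatorname{dist}_G(q,v)$.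
   Context: For a region $R$ of a division of $G$ (a collection of edge-induced subgraphs whose union is $G$), $\partial R$ is the set of vertices of $R$ that belong to more than one region. Additively weighted Voronoi diagram: given a graph $H$, a set $S$ of sites on a face of $H$, and weights $\omega:S\to\mathbb{R}_{\ge 0}$, define $d^\omega(s,v)=\omega(s)+\operatorname{dist}_H(s,v)$ for $s\in S$, $v\in V(H)$, and $\operatorname{Vor}(s)=\{v\in V(H) : \forall s'\neq s,\ (d^\omega(s,v),-\omega(s)) < (d^\omega(s',v),-\omega(s'))\}$, where pairs are compared lexicographically (i.e., ties in distance are broken in favor of larger $\omega$). Here $H=R_{i+1}^{\operatorname{out}}$, so distances in $d^\omega$ are measured in $R_{i+1}^{\operatorname{out}}$. *)

(* Defs.v *)
From HB Require Import structures.
From mathcomp Require Import all_boot all_order all_algebra.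
From mathcomp Require Import classical_sets reals ereal.
Set Implicit Arguments. Unset Strict Implicit. Unset Printing Implicit Defensive.
Import Order.TTheory GRing.Theory Num.Theory.
Local Open Scope ring_scope.

(* A (sub)graph on the finite vertex type V is given by its (symmetric) edge
   relation.  Edge-induced subgraphs are subrelations of the edge relation of G. *)
Section Graphs.
Variables (R : realType) (V : finType).

Fixpoint wlen (w : V -> V -> R) (x : V) (p : seq V) : R :=
  if p is y :: p' then w x y + wlen w y p' else 0.

Definition walk (S : rel V) (x y : V) (p : seq V) : bool :=
  path S x p && (last x p == y).

(* dist_S(x,y) : infimum of walk lengths, +oo if y is unreachable *)
Definition dist (S : rel V) (w : V -> V -> R) (x y : V) : \bar R :=
  ereal_inf [set (wlen w x p)%:E | p in [set p | walk S x y p]].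

Definition vert (S : rel V) : pred V := fun x => [exists y, S x y].

Definition subgraph (e S : rel V) : Prop :=
  (forall x y, S x y -> e x y) /\ (forall x y, S x y = S y x).

Definition division (e : rel V) (I : finType) (reg : I -> rel V) : Prop :=
  (forall i, subgraph e (reg i)) /\
  (forall x y, e x y = [exists i, reg i x y]).

Definition bd (I : finType) (reg : I -> rel V) (i : I) : pred V :=
  fun x => vert (reg i) x && [exists j, (j != i) && vert (reg j) x].

Definition cycle_edge (c : seq V) : rel V :=
  fun x y => (x \in c) && (y \in c) && ((y == next c x) || (x == next c y)).

Definition shortest (e : rel V) (w : V -> V -> R) (x y : V) (p : seq V) : Prop :=
  walk e x y p /\ (wlen w x p)%:E = dist e w x y.

Definition last_on (B : pred V) (x : V) (p : seq V) (s : V) : Prop :=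
  exists p1 p2, x :: p = p1 ++ s :: p2 /\ s \in B /\ all (fun u => u \notin B) p2.

Definition dw (H : rel V) (w : V -> V -> R) (om : V -> \bar R) (s v : V) : \bar R :=
  (om s + dist H w s v)%E.

(* additively weighted Voronoi cell of site s (sites: the set S) in H,
   with lexicographic comparison of (d^omega(s,v), -omega(s)) *)
Definition Vor (H : rel V) (w : V -> V -> R) (S : pred V) (om : V -> \bar R)
  (s : V) : pred V :=
  fun v => vert H v &&
    [forall s', ((s' \in S) && (s' != s)) ==>
       ((dw H w om s v < dw H w om s' v)%E ||
        ((dw H w om s v == dw H w om s' v) && (om s' < om s)%E))].

End Graphs.

(* Main.v *)
Require Import Defs.
From HB Require Import structures.
From mathcomp Require Import all_boot all_order all_algebra.
From mathcomp Require Import classical_sets reals ereal.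
From mathcomp Require boolp.
Import Order.TTheory GRing.Theory Num.Theory.
Set Implicit Arguments. Unset Strict Implicit. Unset Printing Implicit Defensive.
Local Open Scope ring_scope.

Section Gen.
Variables (R : realType) (V : finType) (w : V -> V -> R).

Lemma wlen_cat x p r : wlen w x (p ++ r) = wlen w x p + wlen w (last x p) r.
Proof. by elim: p x => [|y p IH] x /=; [rewrite add0r | rewrite IH addrA]. Qed.

Lemma walk_cat (S : rel V) x y z p r :
  walk S x y p -> walk S y z r -> walk S x z (p ++ r).
Proof.
by rewrite /walk cat_path last_cat => /andP[-> /eqP->] /andP[-> ->].
Qed.

Lemma wlen_ge0 (S : rel V) x p : (forall a b, S a b -> 0 < w a b) ->
  path S x p -> 0 <= wlen w x p.
Proof.
move=> wp; elim: p x => [|y p IH] x //= /andP[Sxy Hp].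
by rewrite addr_ge0 ?IH // ltW // wp.
Qed.

Lemma wlen_gt0 (S : rel V) x p : (forall a b, S a b -> 0 < w a b) ->
  path S x p -> p != [::] -> 0 < wlen w x p.
Proof.
move=> wp; case: p => [|y p] //= /andP[Sxy Hp] _.
by rewrite ltr_pwDl ?wp // (wlen_ge0 wp Hp).
Qed.

Lemma dist_le (S : rel V) x y p : walk S x y p -> (dist S w x y <= (wlen w x p)%:E)%E.
Proof. by move=> H; apply: ereal_inf_lbound; exists p. Qed.

Lemma split_mem (x : V) l : x \in l -> exists p1 p2, l = p1 ++ x :: p2.
Proof.
elim: l => [|y l IH] //; rewrite in_cons => /orP[/eqP->|/IH [p1 [p2 ->]]].
  by exists [::], l.
by exists (y :: p1), p2.
Qed.

Lemma shorten_walk (S : rel V) x y p : (forall a b, S a b -> 0 < w a b) ->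
  walk S x y p -> exists p', [/\ walk S x y p', uniq (x :: p') & wlen w x p' <= wlen w x p].
Proof.
move=> wp; elim: p x => [|z p IH] x.
  by move=> H; exists [::]; split.
rewrite /walk /= => /andP[/andP[Sxz Hp] Hl].
have [p'' [/andP[Hp'' Hl''] Hu Hle]] := IH z (introT andP (conj Hp Hl)).
case Hx: (x \in z :: p'').
  have [p1 [p2 E]] := split_mem Hx.
  have Hu2 : uniq (x :: p2).
    by move: Hu; rewrite E cat_uniq => /and3P[_ _].
  case: p1 E => [|z' p1] /= [Ez E].
    subst; exists p2; split => //; first by rewrite /walk Hp'' Hl''.
    by rewrite (le_trans Hle) // lerDr ltW // wp.
  subst z' p''; move: Hp'' Hl''; rewrite cat_path last_cat /= => /andP[Hp1 /andP[Sl Hp2]] Hl2.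
  exists p2; split => //; first by rewrite /walk Hp2 Hl2.
  apply: (le_trans _ (_ : wlen w z p <= w x z + wlen w z p)).
    apply: le_trans Hle; rewrite wlen_cat /= addrA lerDr.
    by rewrite addr_ge0 ?(wlen_ge0 wp Hp1) // ltW // wp.
  by rewrite lerDr ltW // wp.
exists (z :: p''); split.
- by rewrite /walk /= Sxz Hp'' Hl''.
- by rewrite /= Hx.
- by rewrite /= lerD2l.
Qed.

Lemma dist_attained (S : rel V) x y : (forall a b, S a b -> 0 < w a b) ->
  (exists p, walk S x y p) ->
  exists p, walk S x y p /\ (wlen w x p)%:E = dist S w x y.
Proof.
move=> wp [p0 Hp0].
pose T := {k : 'I_#|V|.+1 & k.-tuple V}.
have mkT : forall p : seq V, uniq (x :: p) -> {t : T | tval (tagged t) = p}.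
  move=> p Hu; have Hs : (size p < #|V|.+1)%N.
    have := max_card (mem (x :: p)); rewrite (card_uniqP Hu) /=.
    by move=> H; apply: leq_trans H.
  by exists (@existT _ (fun k : 'I_#|V|.+1 => k.-tuple V) (Ordinal Hs) (in_tuple p)).
pose P : pred T := fun t => walk S x y (tagged t) && uniq (x :: tagged t).
pose F : T -> R := fun t => wlen w x (tagged t).
have [p1 [Hw1 Hu1 _]] := shorten_walk wp Hp0.
have [t0 Et0] := mkT p1 Hu1.
have Pt0 : P t0 by rewrite /P Et0 Hw1 Hu1.
case: (arg_minP F Pt0) => t /andP[Hwt Hut] Hmin.
exists (tagged t); split => //.
apply/eqP; rewrite eq_le dist_le // andbT.
apply/ereal_infP => _ [r Hr <-]; rewrite lee_fin.
have [r' [Hw' Hu' Hle']] := shorten_walk wp Hr.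
have [t' Et'] := mkT r' Hu'.
apply: le_trans Hle'; rewrite -Et'.
by apply: (Hmin t'); rewrite /P Et' Hw' Hu'.
Qed.

Lemma last_decomp (B : pred V) l : has (fun u => u \in B) l ->
  exists p1 s p2, l = p1 ++ s :: p2 /\ s \in B /\ all (fun u => u \notin B) p2.
Proof.
elim: l => [|y l IH] //= /orP[By|hl].
  case hl: (has (fun u => u \in B) l).
    by have [p1 [s [p2 [-> [Bs A]]]]] := IH hl; exists (y :: p1), s, p2.
  exists [::], y, l; split => //; split => //.
  move/negbT: hl; elim: l {IH} => //= a l IH /norP[-> H]; exact: IH.
by have [p1 [s [p2 [-> [Bs A]]]]] := IH hl; exists (y :: p1), s, p2.
Qed.

Lemma last_on_uniq (B : pred V) x p s : last_on B x p s ->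
  s = last x (seq.filter (fun u => u \in B) (x :: p)).
Proof.
move=> [p1 [p2 [E [Bs A]]]]; rewrite {}E filter_cat /= Bs.
have -> : seq.filter (fun u => u \in B) p2 = [::].
  by elim: p2 A => //= a l IH /andP[/negbTE -> /IH].
by rewrite cats1 last_rcons.
Qed.

Lemma pre_decomp (x s : V) p p1 p2 : x :: p = p1 ++ s :: p2 ->
  exists pre, p = pre ++ p2 /\ last x pre = s.
Proof.
case: p1 => [|a p1] /= [-> ->]; first by exists [::].
by exists (rcons p1 s); rewrite cat_rcons last_rcons.
Qed.
End Gen.

Theorem lemma3 (R : realType) (V : finType) (e : rel V) (w : V -> V -> R)
  (* G: simple undirected connected graph, strictly positive symmetric weights *)
  (e_sym : forall x y, e x y = e y x) (e_irr : forall x, ~~ e x x)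
  (w_sym : forall x y, w x y = w y x)
  (w_pos : forall x y, e x y -> 0 < w x y)
  (G_conn : forall x y, exists p, walk e x y p)
  (* shortest paths are unique *)
  (uniq_sp : forall x y p1 p2, shortest e w x y p1 -> shortest e w x y p2 -> p1 = p2)
  (* the two levels of the hierarchical division *)
  (I1 I0 : finType) (reg1 : I1 -> rel V) (reg0 : I0 -> rel V)
  (div1 : division e reg1) (div0 : division e reg0)
  (j : I1) (k : I0)
  (sub_k : forall x y, reg0 k x y -> reg1 j x y)
  (* C: simple cycle of R_{i+1} containing the boundary of R_{i+1} *)
  (c : seq V) (c_uniq : uniq c) (c_size : (3 <= size c)%N) (c_cyc : cycle (reg1 j) c)
  (c_bd : forall x, bd reg1 j x -> x \in c)
  (q v : V) (q_bd : bd reg0 k q) (v_out : ~~ vert (reg1 j) v) :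
  let Rout : rel V := fun x y => (e x y && ~~ reg1 j x y) || cycle_edge c x y in
  let om : V -> \bar R := fun s => dist e w q s in
  forall s, bd reg1 j s ->
    (Vor Rout w (bd reg1 j) om s v <->
       (forall p, shortest e w q v p -> last_on (bd reg1 j) q p s)) /\
    ((forall p, shortest e w q v p -> last_on (bd reg1 j) q p s) ->
       dw Rout w om s v = dist e w q v).
Proof.
move=> Rout om s Bs.
set B := bd reg1 j.
have regsym : forall x y, reg1 j x y = reg1 j y x := (div1.1 j).2.
have rege : forall i x y, reg1 i x y -> e x y := fun i => (div1.1 i).1.
pose Ro' : rel V := fun x y => e x y && ~~ reg1 j x y.
have Rout_e : forall a b, Rout a b -> e a b.
  move=> a b /orP[/andP[]//|/andP[/andP[ai bi] /orP[/eqP->|/eqP->]]].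
  - exact: rege (next_cycle c_cyc ai).
  - rewrite e_sym; exact: rege (next_cycle c_cyc bi).
have wpR : forall a b, Rout a b -> 0 < w a b by move=> a b /Rout_e; exact: w_pos.
have L : forall x p, path e x p -> ~~ vert (reg1 j) (last x p) ->
    all (fun u => u \notin B) p -> (~~ vert (reg1 j) x || B x) && path Ro' x p.
  move=> x p; elim: p x => [|y p IH] x /=; first by move=> _ -> _.
  move=> /andP[exy Hp] Hl /andP[nBy Hall].
  have /andP[] := IH y Hp Hl Hall.
  have -> : B y = false by apply/negbTE.
  rewrite orbF => nvy HpR.
  have nr : ~~ reg1 j x y.
    apply/negP => rxy; move/negP: nvy; apply; apply/existsP; exists x; by rewrite regsym.
  rewrite /Ro' exy nr HpR !andbT.
  have := exy; rewrite (div1.2) => /existsP[i rixy].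
  have nij : i != j by apply: contraNneq nr => <-.
  case vx: (vert (reg1 j) x) => //=.
  rewrite /B /bd vx /=; apply/existsP; exists i; rewrite nij /=.
  by apply/existsP; exists y.
have [p0 [Hw0 E0]] := dist_attained w_pos (G_conn q v).
have sp0 : shortest e w q v p0 by split.
have vq : vert (reg1 j) q.
  move: q_bd => /andP[/existsP[y ry] _]; apply/existsP; exists y; exact: sub_k.
have nvv := v_out.
move: (Hw0) => /andP[Hp0 /eqP Hl0].
have hasB : has (fun u => u \in B) (q :: p0).
  apply/negPn/negP => nh.
  have Hall : all (fun u => u \notin B) (q :: p0).
    by elim: (q :: p0) nh => //= a l IH /norP[-> H]; exact: IH.
  move: Hall => /= /andP[nBq Hall].
  have := L q p0 Hp0; rewrite Hl0 => /(_ nvv Hall) /andP[].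
  by move: nBq; rewrite vq /= unfold_in => /negP.
have [p1 [ss [p2 [E [Bss A2]]]]] := last_decomp hasB.
have lo : last_on B q p0 ss by exists p1, p2.
have [pre [Ep Elp]] := pre_decomp E.
move: (Hp0) (Hl0); rewrite Ep cat_path last_cat Elp => /andP[Hpre Hp2] Hl2.
have Hp2R : path Rout ss p2.
  have := L ss p2 Hp2; rewrite Hl2 => /(_ nvv A2) /andP[_ H].
  by apply: sub_path H => a b; rewrite /Ro' /Rout => ->.
have len0 : wlen w q p0 = wlen w q pre + wlen w ss p2 by rewrite Ep wlen_cat Elp.
have dqs : om ss = (wlen w q pre)%:E.
  have [r [Hr Er]] := dist_attained w_pos (ex_intro _ pre (introT andP (conj Hpre (introT eqP Elp)))).
  rewrite /om -Er; apply/eqP; rewrite eq_le.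
  have := dist_le w (walk_cat Hr (introT andP (conj Hp2 (introT eqP Hl2)))).
  rewrite -E0 wlen_cat (eqP (proj2 (andP Hr))) len0 !lee_fin lerD2r => ->.
  rewrite andbT -lee_fin Er; exact: (dist_le w (introT andP (conj Hpre (introT eqP Elp)))).
have dRs : dist Rout w ss v = (wlen w ss p2)%:E.
  have [r [Hr Er]] := dist_attained wpR (ex_intro _ p2 (introT andP (conj Hp2R (introT eqP Hl2)))).
  rewrite -Er; apply/eqP; rewrite eq_le.
  have Hre : walk e ss v r.
    by move: Hr => /andP[Hr Hlr]; rewrite /walk Hlr andbT; apply: sub_path Hr.
  have := dist_le w (walk_cat (introT andP (conj Hpre (introT eqP Elp))) Hre).
  rewrite -E0 wlen_cat Elp len0 !lee_fin lerD2l => ->.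
  rewrite andbT -lee_fin Er; exact: (dist_le w (introT andP (conj Hp2R (introT eqP Hl2)))).
have dwD : dw Rout w om ss v = (wlen w q p0)%:E.
  by rewrite /dw dqs dRs -EFinD len0.
have key : forall s', s' \in B -> s' != ss ->
    ((wlen w q p0)%:E < dw Rout w om s' v)%E \/
    (dw Rout w om s' v = (wlen w q p0)%:E /\ (om s' < om ss)%E).
  move=> s' Bs' ne.
  have [r1 [Hr1 Er1]] := dist_attained w_pos (G_conn q s').
  have [[r0 Hr0]|nex] := boolp.pselect (exists r, walk Rout s' v r); last first.
    left; rewrite /dw /om -Er1.
    have -> : dist Rout w s' v = +oo%E.
      rewrite /dist; set A := (X in ereal_inf X).
      have -> : A = set0.
        by apply/seteqP; split => // x [r Hr _]; apply: nex; exists r.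
      exact: ereal_inf0.
    by rewrite addey // ltey.
  have [r2 [Hr2 Er2]] := dist_attained wpR (ex_intro _ r0 Hr0).
  have Hr2e : walk e s' v r2.
    by move: Hr2 => /andP[Hr Hlr]; rewrite /walk Hlr andbT; apply: sub_path Hr.
  have Hw12 := walk_cat Hr1 Hr2e.
  have := dist_le w Hw12.
  rewrite -E0 wlen_cat (eqP (proj2 (andP Hr1))) lee_fin le_eqVlt => /orP[/eqP Eq|lt].
    right; split; first by rewrite /dw /om -Er1 -Er2 -EFinD Eq.
    have Hls : last q r1 = s' := eqP (proj2 (andP Hr1)).
    have E12 : r1 ++ r2 = pre ++ p2.
      rewrite -Ep; apply: uniq_sp sp0; split => //.
      by rewrite wlen_cat Hls -Eq.
    rewrite /om -Er1 -/(om ss) dqs lte_fin.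
    have Tk : take (size r1) (pre ++ p2) = r1 by rewrite -E12 take_size_cat.
    case: (leqP (size pre) (size r1)) => hs.
      exfalso.
      have Er1' : r1 = pre ++ take (size r1 - size pre) p2.
        by rewrite -[in LHS]Tk take_cat ltnNge hs.
      move: Hls; rewrite Er1' last_cat Elp => Hl.
      have := mem_last ss (take (size r1 - size pre) p2); rewrite Hl in_cons => /orP[/eqP h|].
        by move/eqP: ne.
      move=> /mem_take h; move/allP: A2 => /(_ _ h).
      by rewrite Bs'.
    have Epre : pre = r1 ++ drop (size r1) pre.
      have Tp : take (size r1) pre = r1 by rewrite -[RHS]Tk take_cat hs.
      by rewrite -{1}(cat_take_drop (size r1) pre) Tp.
    have Hpt : path e s' (drop (size r1) pre).
      by move: Hpre; rewrite {1}Epre cat_path Hls => /andP[].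
    rewrite Epre wlen_cat Hls ltrDl (wlen_gt0 w_pos Hpt) //.
    by rewrite -size_eq0 size_drop subn_eq0 -ltnNge.
  by left; rewrite /dw /om -Er1 -Er2 -EFinD lte_fin.
have sEq : (forall p, shortest e w q v p -> last_on B q p s) -> s = ss.
  by move=> H; rewrite (last_on_uniq (H p0 sp0)) -(last_on_uniq lo).
have Vss : Vor Rout w B om ss v.
  apply/andP; split.
    have [r Hr] := G_conn v q.
    case: r Hr => [|y r] /andP[Hr /eqP Hl].
      by move: vq; rewrite -Hl /= (negbTE nvv).
    move: Hr => /= /andP[evy _]; apply/existsP; exists y.
    rewrite /Rout evy /=; apply/orP; left; apply/negP => rvy.
    by move/negP: nvv; apply; apply/existsP; exists y.
  apply/forallP => s'; apply/implyP => /andP[Bs' ne].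
  have [lt|[eq lt]] := key s' Bs' ne.
    by rewrite dwD lt.
  by rewrite dwD eq eqxx lt orbT.
split; last by move=> H; rewrite (sEq H) dwD E0.
split; last by move=> H; rewrite (sEq H).
move=> Vs.
have Bs_in : s \in B := Bs.
have -> : s = ss.
  apply/eqP; apply/negP => /negP ne.
  move: Vs => /andP[_ /forallP /(_ ss)]; rewrite Bss eq_sym ne /= dwD.
  have [lt|[eq lt]] := key s Bs_in ne.
    move=> /orP[h|/andP[/eqP h _]].
      by have := lt_trans lt h; rewrite ltxx.
    by rewrite h ltxx in lt.
  rewrite eq eqxx ltxx /= => h.
  by have := lt_trans lt h; rewrite ltxx.
by move=> p sp; rewrite (uniq_sp _ _ _ _ sp sp0).
Qed.
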